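(* Let $(\mathcal{X},d)$ be a complete separable metric space, $n \ge 2$, and let $P_X$ put mass $1/n$ on each of $n$ distinct points $x_1, \ldots, x_n \in \mathcal{X}$. Then $D(x_1; P_X) \leq 1 + \left(1 - \frac{1}{n} \right)\left(1 - \frac{3}{n} \right)$, with equality if and only if $d(x_i, x_j) = d(x_i, x_1) + d(x_1, x_j)$ for all distinct $i, j \in \{ 2, \ldots, n \}$.
   Context: Define $h: \mathcal{X}^3 \to \mathbb{R}$ by $h(x_1, x_2, x_3) := \mathbb{I}( x_3 \notin \{x_1, x_2\} ) \dfrac{ d^2(x_1, x_3) + d^2(x_2, x_3) - d^2(x_1, x_2) }{d(x_1, x_3)\, d(x_2, x_3) }$, where $h := 0$ when $x_3 \in \{x_1,x_2\}$. The metric spatial depth of $\mu \in \mathcal{X}$ with respect to a probability distribution $P_X$ on $\mathcal{X}$ is $D(\mu; P_X) := 1 - \frac{1}{2} \mathrm{E} \{ h(X_1, X_2, \mu) \}$, where $X_1, X_2 \sim P_X$ are independent. *)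

(* Defs.v *)
From Stdlib Require Import Reals Lra Classical ClassicalEpsilon.
Open Scope R_scope.

Record is_metric {X : Type} (d : X -> X -> R) : Prop := {
  met_nonneg : forall x y, 0 <= d x y;
  met_eq0 : forall x y, d x y = 0 <-> x = y;
  met_sym : forall x y, d x y = d y x;
  met_tri : forall x y z, d x z <= d x y + d y z }.

Definition metric_complete {X : Type} (d : X -> X -> R) : Prop :=
  forall u : nat -> X,
    (forall eps, 0 < eps -> exists N, forall m k, (N <= m)%nat -> (N <= k)%nat ->
        d (u m) (u k) < eps) ->
    exists l, forall eps, 0 < eps -> exists N, forall m, (N <= m)%nat -> d (u m) l < eps.

(* Separability: there is a countable dense subset (X nonempty case suffices
   here, since the theorem supplies points of X). *)
Definition metric_separable {X : Type} (d : X -> X -> R) : Prop :=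
  exists s : nat -> X, forall x eps, 0 < eps -> exists k, d x (s k) < eps.

Definition h_kernel {X : Type} (d : X -> X -> R) (x1 x2 x3 : X) : R :=
  if excluded_middle_informative (x3 = x1 \/ x3 = x2) then 0
  else (d x1 x3 ^ 2 + d x2 x3 ^ 2 - d x1 x2 ^ 2) / (d x1 x3 * d x2 x3).

Fixpoint sum_lt (n : nat) (f : nat -> R) : R :=
  match n with O => 0 | S m => sum_lt m f + f m end.

(* Metric spatial depth D(mu; P) for a finitely supported distribution P
   putting mass w k on the point y k, k < m:
   D = 1 - 1/2 E h(X1, X2, mu) with X1, X2 iid ~ P, i.e. the double sum. *)
Definition depth_discrete {X : Type} (d : X -> X -> R) (m : nat)
    (w : nat -> R) (y : nat -> X) (mu : X) : R :=
  1 - / 2 * sum_lt m (fun i => sum_lt m (fun j => w i * w j * h_kernel d (y i) (y j) mu)).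

(* Main.v *)
Require Import Defs.
From Stdlib Require Import Reals Lra Lia Psatz Arith Classical ClassicalEpsilon.
Open Scope R_scope.

Lemma sum_lt_ext n f g : (forall k, (k < n)%nat -> f k = g k) -> sum_lt n f = sum_lt n g.
Proof. induction n; simpl; intros H; auto. rewrite IHn by (intros; apply H; lia). rewrite H by lia. auto. Qed.

Lemma sum_lt_plus n f g : sum_lt n (fun k => f k + g k) = sum_lt n f + sum_lt n g.
Proof. induction n; simpl; [lra|]. rewrite IHn; lra. Qed.

Lemma sum_lt_scal n c f : sum_lt n (fun k => c * f k) = c * sum_lt n f.
Proof. induction n; simpl; [lra|]. rewrite IHn; lra. Qed.

Lemma sum_lt_nonneg n f : (forall k, (k < n)%nat -> 0 <= f k) -> 0 <= sum_lt n f.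
Proof. induction n; simpl; intros H; [lra|]. assert (0 <= f n) by (apply H; lia).
  assert (0 <= sum_lt n f) by (apply IHn; intros; apply H; lia). lra. Qed.

Lemma sum_lt_zero n f : (forall k, (k < n)%nat -> 0 <= f k) -> sum_lt n f = 0 ->
  forall k, (k < n)%nat -> f k = 0.
Proof. induction n; simpl; intros H S k Hk; [lia|].
  assert (0 <= f n) by (apply H; lia).
  assert (0 <= sum_lt n f) by (apply sum_lt_nonneg; intros; apply H; lia).
  destruct (Nat.eq_dec k n). subst; lra. apply IHn; try lra; try lia. intros; apply H; lia. Qed.

Lemma sum_lt_zero_conv n f : (forall k, (k < n)%nat -> f k = 0) -> sum_lt n f = 0.
Proof. induction n; simpl; intros H; [lra|]. rewrite IHn by (intros; apply H; lia). rewrite H by lia. lra. Qed.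

Definition ind1 (j : nat) : R := if Nat.eqb j 0 then 0 else 1.
Definition indeq (i j : nat) : R := if Nat.eqb i j then 1 else 0.

Lemma sum_ind1 n : (1 <= n)%nat -> sum_lt n ind1 = INR n - 1.
Proof. induction n; intros H; [lia|]. simpl sum_lt. destruct n.
  simpl. unfold ind1. simpl. lra.
  rewrite IHn by lia. unfold ind1. simpl Nat.eqb. rewrite !S_INR. lra. Qed.

Lemma sum_indeq n i : (i < n)%nat -> sum_lt n (indeq i) = 1.
Proof. induction n; intros H; [lia|]. simpl sum_lt. destruct (Nat.eq_dec i n).
  - subst. rewrite sum_lt_zero_conv. unfold indeq. rewrite Nat.eqb_refl. lra.
    intros k Hk. unfold indeq. destruct (Nat.eqb_spec n k); [lia|auto].
  - rewrite IHn by lia. unfold indeq. destruct (Nat.eqb_spec i n); [lia|lra]. Qed.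

Theorem lemma2 (X : Type) (d : X -> X -> R)
  (Hmet : is_metric d) (Hcomp : metric_complete d) (Hsep : metric_separable d)
  (n : nat) (Hn : (2 <= n)%nat) (x : nat -> X)
  (Hdist : forall i j, (i < n)%nat -> (j < n)%nat -> i <> j -> x i <> x j) :
  let D1 := depth_discrete d n (fun _ => / INR n) x (x 0%nat) in
  D1 <= 1 + (1 - / INR n) * (1 - 3 / INR n) /\
  (D1 = 1 + (1 - / INR n) * (1 - 3 / INR n) <->
   forall i j, (1 <= i < n)%nat -> (1 <= j < n)%nat -> i <> j ->
     d (x i) (x j) = d (x i) (x 0%nat) + d (x 0%nat) (x j)).
Proof.
  intros D1.
  set (hk := fun i j => h_kernel d (x i) (x j) (x 0%nat)).
  set (c := fun i j => ind1 i * (ind1 j * (-2) + 4 * indeq i j)).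
  set (e := fun i j => if (Nat.eqb i 0 || Nat.eqb j 0 || Nat.eqb i j)%bool then 0 else hk i j + 2).
  destruct Hmet as [Hnn Heq Hsym Htri].
  assert (Hpos : forall i, (1 <= i < n)%nat -> 0 < d (x i) (x 0%nat)).
  { intros i Hi. assert (x i <> x 0%nat) by (apply Hdist; lia).
    destruct (Hnn (x i) (x 0%nat)) as [|E]; auto. symmetry in E. apply Heq in E; tauto. }
  assert (Hoff : forall i j, (1 <= i < n)%nat -> (1 <= j < n)%nat -> i <> j ->
     hk i j + 2 = ((d (x i) (x 0%nat) + d (x j) (x 0%nat))^2 - d (x i) (x j)^2)
                   / (d (x i) (x 0%nat) * d (x j) (x 0%nat))).
  { intros i j Hi Hj Hij. unfold hk, h_kernel.
    destruct (excluded_middle_informative _) as [[E|E]|_].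
    - exfalso. apply (Hdist 0%nat i); auto; lia.
    - exfalso. apply (Hdist 0%nat j); auto; lia.
    - pose proof (Hpos i Hi); pose proof (Hpos j Hj). field. lra. }
  assert (Hdec : forall i j, (i < n)%nat -> (j < n)%nat -> hk i j = c i j + e i j).
  { intros i j Hi Hj. unfold c, e, ind1, indeq.
    destruct (Nat.eqb_spec i 0).
    { subst. simpl. unfold hk, h_kernel. destruct (excluded_middle_informative _); [lra|tauto]. }
    destruct (Nat.eqb_spec j 0).
    { subst. destruct i; [lia|]. simpl. unfold hk, h_kernel. destruct (excluded_middle_informative _); [lra|tauto]. }
    destruct (Nat.eqb_spec i j).
    { subst. simpl. unfold hk, h_kernel. destruct (excluded_middle_informative _) as [[E|E]|_].
      - exfalso. apply (Hdist 0%nat j); auto; lia.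
      - exfalso. apply (Hdist 0%nat j); auto; lia.
      - assert (d (x j) (x j) = 0) by (apply Heq; auto).
        pose proof (Hpos j ltac:(lia)). rewrite H. field. lra. }
    simpl. lra. }
  assert (Hepos : forall i j, (i < n)%nat -> (j < n)%nat -> 0 <= e i j).
  { intros i j Hi Hj. unfold e. destruct (Nat.eqb_spec i 0); simpl; [lra|].
    destruct (Nat.eqb_spec j 0); simpl; [lra|]. destruct (Nat.eqb_spec i j); simpl; [lra|].
    rewrite Hoff by lia. pose proof (Hpos i ltac:(lia)); pose proof (Hpos j ltac:(lia)).
    pose proof (Htri (x i) (x 0%nat) (x j)). rewrite (Hsym (x 0%nat) (x j)) in H1.
    pose proof (Hnn (x i) (x j)).
    apply Rmult_le_pos; [nra|]. left; apply Rinv_0_lt_compat; nra. }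
  assert (Hsc : forall i, (i < n)%nat -> sum_lt n (c i) = ind1 i * (-2 * (INR n - 1) + 4)).
  { intros i Hi. unfold c. rewrite sum_lt_scal, sum_lt_plus.
    rewrite (sum_lt_ext n (fun k => ind1 k * -2) (fun k => -2 * ind1 k)) by (intros; lra).
    rewrite sum_lt_scal, sum_lt_scal, sum_ind1, sum_indeq by lia. lra. }
  assert (HD : D1 = 1 - / 2 * (/ INR n * / INR n) *
      (sum_lt n (fun i => ind1 i * (-2 * (INR n - 1) + 4)) + sum_lt n (fun i => sum_lt n (e i)))).
  { unfold D1, depth_discrete. f_equal. rewrite Rmult_assoc. f_equal.
    rewrite <- sum_lt_plus, <- sum_lt_scal. apply sum_lt_ext. intros i Hi.
    rewrite <- Hsc by auto. rewrite <- sum_lt_plus, <- sum_lt_scal. apply sum_lt_ext.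
    intros j Hj. fold (hk i j). rewrite Hdec by auto. lra. }
  rewrite (sum_lt_ext n (fun i => ind1 i * (-2 * (INR n - 1) + 4)) (fun i => (-2 * (INR n - 1) + 4) * ind1 i)) in HD by (intros; lra).
  rewrite sum_lt_scal, sum_ind1 in HD by lia.
  set (S := sum_lt n (fun i => sum_lt n (e i))) in HD.
  assert (HS : 0 <= S) by (apply sum_lt_nonneg; intros; apply sum_lt_nonneg; intros; apply Hepos; auto).
  assert (Hnr : 2 <= INR n) by (replace 2 with (INR 2) by (simpl; lra); apply le_INR; auto).
  assert (HD2 : D1 = 1 + (1 - / INR n) * (1 - 3 / INR n) - / 2 * (/ INR n * / INR n) * S).
  { rewrite HD. field. lra. }
  assert (Hk : 0 < / 2 * (/ INR n * / INR n)).
  { apply Rmult_lt_0_compat; [lra|]. apply Rmult_lt_0_compat; apply Rinv_0_lt_compat; lra. }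
  split. { rewrite HD2. nra. }
  split.
  - intros Heq1. assert (S = 0) by nra.
    intros i j Hi Hj Hij.
    assert (Hrow : sum_lt n (e i) = 0).
    { apply (sum_lt_zero n (fun i => sum_lt n (e i))); auto; try lia.
      intros; apply sum_lt_nonneg; intros; apply Hepos; auto. }
    assert (E0 : e i j = 0).
    { apply (sum_lt_zero n (e i)); auto; try lia. intros; apply Hepos; auto; lia. }
    unfold e in E0. destruct (Nat.eqb_spec i 0); [lia|]. destruct (Nat.eqb_spec j 0); [lia|].
    destruct (Nat.eqb_spec i j); [lia|]. simpl in E0.
    rewrite Hoff in E0 by auto.
    pose proof (Hpos i Hi); pose proof (Hpos j Hj).
    pose proof (Htri (x i) (x 0%nat) (x j)). rewrite (Hsym (x 0%nat) (x j)) in *.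
    pose proof (Hnn (x i) (x j)).
    assert (Hz : (d (x i) (x 0%nat) + d (x j) (x 0%nat)) ^ 2 - d (x i) (x j) ^ 2 = 0).
    { unfold Rdiv in E0. apply Rmult_integral in E0. destruct E0 as [E0|E0]; auto.
      exfalso. revert E0. apply Rinv_neq_0_compat. nra. }
    nra.
  - intros Hcond. rewrite HD2.
    assert (S = 0).
    { apply sum_lt_zero_conv. intros i Hi. apply sum_lt_zero_conv. intros j Hj.
      unfold e. destruct (Nat.eqb_spec i 0); simpl; auto.
      destruct (Nat.eqb_spec j 0); simpl; auto. destruct (Nat.eqb_spec i j); simpl; auto.
      rewrite Hoff by lia. rewrite (Hcond i j) by lia. rewrite (Hsym (x 0%nat) (x j)).
      unfold Rdiv. ring. }
    rewrite H. ring.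
Qed.
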